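(* Let $V$ be a real vector space endowed with some topology and $X$ a convex cone in $V$. Suppose $w\in\mathbb{R}$, $f\in P_X$, and $R$ is a locally nonsatiated total relation on $X$. If $C\subseteq X$ is a cone in $V$ and $R$ is $C$-antichain-convex, then $\mathcal{M}(R,B^w_{f,X})$ is a convex $C$-antichain included in $\operatorname{bd}(F^w_f)$.
   Context: A cone in $V$ is a subset $K$ with $\lambda K\subseteq K$ for all $\lambda>0$ (possibly empty, need not contain $0$). $V^*$ denotes the continuous linear functionals on $V$; $P_X=\{f\in V^*: f(x)>0\text{ for all }x\in X\setminus\{0\}\}$; $F^w_f=\{v\in V:f(v)\le w\}$, $B^w_{f,X}=F^w_f\cap X$; $\operatorname{bd}$ is the topological boundary. A set $A$ is $C$-antichain-convex iff for all $x,y\in A$, $\lambda\in[0,1]$ with $y-x\notin C\cup(-C)$, $\lambda x+(1-\lambda)y\in A$; $A$ is a $C$-antichain iff for all distinct $x,y\in A$, $y-x\notin C\cup(-C)$. For a relation $R\subseteq X\times X$, $R(x)=\{t\in X:(t,x)\in R\}$; $R$ is total iff for all $s,t$, $t\in R(s)$ or $s\in R(t)$; $R$ is $C$-antichain-convex iff each $R(x)$ is $C$-antichain-convex; $R$ is locally nonsatiated iff $x\in\operatorname{cl}(\{y\in X:y\in R(x),\ x\notin R(y)\})$ for all $x\in X$. For $S\subseteq X$, $m\in S$ is $R$-maximal on $S$ iff for every $s\in S$ with $s\in R(m)$, $m\in R(s)$; $\mathcal{M}(R,S)$ is the set of these. *)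

(* Defs.v *)
From HB Require Import structures.
From mathcomp Require Import all_boot all_order all_algebra.
From mathcomp Require Import all_classical all_reals all_analysis.
Set Implicit Arguments. Unset Strict Implicit. Unset Printing Implicit Defensive.
Import Order.TTheory GRing.Theory Num.Theory.
Local Open Scope classical_set_scope.
Local Open Scope ring_scope.

Section Defs.
Variables (R : realType) (V : preTopologicalLmodType R).

(* cone: closed under multiplication by positive scalars (may be empty,
   need not contain 0) *)
Definition is_cone (K : set V) : Prop :=
  forall (l : R) (x : V), 0 < l -> K x -> K (l *: x).

Definition is_convex (A : set V) : Prop :=
  forall (x y : V) (l : R), A x -> A y -> 0 <= l <= 1 ->
    A (l *: x + (1 - l) *: y).

(* P_X : continuous linear functionals strictly positive on X \ {0} *)
Definition strictly_positive_on (X : set V) (f : {scalar V}) : Prop :=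
  continuous (fun v : V => (f v : R^o)) /\ (forall x, X x -> x != 0 -> 0 < f x).

Definition Fset (w : R) (f : {scalar V}) : set V := [set v | f v <= w].
Definition Bset (w : R) (f : {scalar V}) (X : set V) : set V := Fset w f `&` X.

Definition bd (A : set V) : set V := closure A `\` interior A.

Definition antichain_convex (C A : set V) : Prop :=
  forall (x y : V) (l : R), A x -> A y -> 0 <= l <= 1 ->
    ~ C (y - x) -> ~ C (- (y - x)) -> A (l *: x + (1 - l) *: y).

Definition antichain (C A : set V) : Prop :=
  forall x y : V, A x -> A y -> x <> y -> ~ C (y - x) /\ ~ C (- (y - x)).

(* A relation on X is a predicate Rel : V -> V -> Prop with Rel t x -> X t /\ X x;
   Rel t x means (t, x) \in R. *)
Definition rel_on (X : set V) (Rel : V -> V -> Prop) : Prop :=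
  forall t x, Rel t x -> X t /\ X x.

Definition Rsec (X : set V) (Rel : V -> V -> Prop) (x : V) : set V :=
  [set t | X t /\ Rel t x].

Definition rel_total (X : set V) (Rel : V -> V -> Prop) : Prop :=
  forall s t, X s -> X t -> Rsec X Rel s t \/ Rsec X Rel t s.

Definition rel_antichain_convex (C X : set V) (Rel : V -> V -> Prop) : Prop :=
  forall x, antichain_convex C (Rsec X Rel x).

Definition locally_nonsatiated (X : set V) (Rel : V -> V -> Prop) : Prop :=
  forall x, X x ->
    closure [set y | X y /\ Rsec X Rel x y /\ ~ Rsec X Rel y x] x.

Definition maximals (X : set V) (Rel : V -> V -> Prop) (S : set V) : set V :=
  [set m | S m /\ forall s, S s -> Rsec X Rel m s -> Rsec X Rel s m].

End Defs.

(* Main.v *)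
Require Import Defs.
From HB Require Import structures.
From mathcomp Require Import all_boot all_order all_algebra.
From mathcomp Require Import all_classical all_reals all_analysis.
From mathcomp Require Import lra.
Import Order.TTheory GRing.Theory Num.Theory.
Local Open Scope classical_set_scope.
Local Open Scope ring_scope.

Theorem theorem13 (R : realType) (V : preTopologicalLmodType R)
  (X : set V) (w : R) (f : {scalar V}) (Rel : V -> V -> Prop) (C : set V) :
  is_cone X -> is_convex X ->
  strictly_positive_on X f ->
  rel_on X Rel -> rel_total X Rel -> locally_nonsatiated X Rel ->
  is_cone C -> C `<=` X ->
  rel_antichain_convex C X Rel ->
  is_convex (maximals X Rel (Bset w f X)) /\
  antichain C (maximals X Rel (Bset w f X)) /\
  maximals X Rel (Bset w f X) `<=` bd (Fset w f).
Proof.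
move=> coneX convX [fc fpos] relon tot lns coneC CX rac.
set M := maximals X Rel (Bset w f X).
have notint : forall m, M m -> ~ interior (Fset w f) m.
  move=> m [[Fm Xm] mmax] hint.
  have := lns m Xm _ hint => -[y [[Xy [[_ Rym] nRmy]] Fy]].
  apply: nRmy; apply: mmax => //; by split.
have bdM : M `<=` bd (Fset w f).
  move=> m Mm; split; last exact: notint.
  apply: subset_closure; by case: Mm => -[].
have noC : forall m1 m2, M m1 -> M m2 -> m1 <> m2 -> ~ C (m2 - m1).
  move=> m1 m2 M1 M2 ne Cd.
  apply: (notint m1 M1).
  have Xd := CX _ Cd.
  have : m2 - m1 != 0 by rewrite subr_eq0; apply/eqP => /esym.
  move/(fpos _ Xd); rewrite raddfB subr_gt0 => lt12.
  have Fm2 : f m2 <= w by case: M2 => -[].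
  have lt1w : f m1 < w by apply: lt_le_trans Fm2.
  have := lt_nbhsl lt1w.
  move/(fc m1) => /= H.
  rewrite /interior /=.
  have H' : nbhs m1 [set v | f v < w] := H.
  by apply: (filterS _ H') => v /ltW.
have ach : antichain C M.
  move=> x y Mx My ne; split; first exact: noC.
  rewrite opprB; apply: noC => //; by move/esym.
split => //.
move=> m1 m2 l M1 M2 l01.
have [<-|ne] := pselect (m1 = m2).
  by rewrite -scalerDl addrC subrK scale1r.
have [[[Fm1 Xm1] max1] [[Fm2 Xm2] max2]] := (M1, M2).
split.
  split; last by apply: convX.
  rewrite /Fset /= linearD !linearZ /=.
  case/andP: l01 => l0 l1.
  rewrite /GRing.scale /=. move: Fm1 Fm2; rewrite /Fset /= => Fm1 Fm2.
  have h1 : l * f m1 <= l * w by rewrite ler_wpM2l.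
  have h2 : (1 - l) * f m2 <= (1 - l) * w by rewrite ler_wpM2l // subr_ge0.
  apply: (le_trans (lerD h1 h2)). by rewrite -mulrDl addrC subrK mul1r.
move=> s [Fs Xs] Rsz.
have key : forall m, M m -> Rsec X Rel s m.
  move=> m [[Fm Xm] mmax].
  case: (tot m s Xm Xs) => // h.
  by apply: mmax.
have [nc1 nc2] := ach m1 m2 M1 M2 ne.
exact: (rac s m1 m2 l (key _ M1) (key _ M2) l01 nc1 nc2).
Qed.
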